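(* For any POVM $\{\mathcal{M}_i\}_{i\in\mathcal{O}}$ on $\mathcal{H}$, \[K^*(\{\mathcal{M}_i\}_{i\in\mathcal{O}})=\max_{A\subseteq\mathcal{O}}\big[\lambda_{\max}(\mathcal{M}_A)-\lambda_{\min}(\mathcal{M}_A)\big],\qquad \mathcal{M}_A=\sum_{i\in A}\mathcal{M}_i,\] where $\lambda_{\max},\lambda_{\min}$ are the largest and smallest eigenvalues (with $\mathcal{M}_\emptyset=0$). Moreover, if $A^*$ attains the maximum and $|\psi\rangle,|\phi\rangle$ are mutually orthogonal normalized eigenvectors of $\mathcal{M}_{A^*}$ for its largest and smallest eigenvalues respectively, then with $\psi=|\psi\rangle\langle\psi|$, $\phi=|\phi\rangle\langle\phi|$, \[2K^*(\{\mathcal{M}_i\}_{i\in\mathcal{O}})=\sum_{i\in\mathcal{O}}|\mathrm{tr}(\mathcal{M}_i(\psi-\phi))|.\]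
   Context: $\mathcal{H}$ is a finite-dimensional Hilbert space of dimension at least 2, $\mathcal{D}(\mathcal{H})$ its density matrices. A POVM is a finite family $\{\mathcal{M}_i\}_{i\in\mathcal{O}}$ of positive semidefinite matrices with $\sum_i\mathcal{M}_i=I$, and $K^*(\{\mathcal{M}_i\}_{i\in\mathcal{O}})=\max_{\rho,\sigma\in\mathcal{D}(\mathcal{H})}\frac12\sum_{i\in\mathcal{O}}|\mathrm{tr}(\mathcal{M}_i(\rho-\sigma))|$. *)

(* Defs.v *)
From HB Require Import structures.
From mathcomp Require Import all_boot all_order all_algebra all_field.
Set Implicit Arguments. Unset Strict Implicit. Unset Printing Implicit Defensive.
Import Order.TTheory GRing.Theory Num.Theory.
Local Open Scope ring_scope.

Definition adjmx (m p : nat) (A : 'M[algC]_(m, p)) : 'M[algC]_(p, m) :=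
  (map_mx (@Num.conj _) A)^T.

Definition hermitian (n : nat) (A : 'M[algC]_n) : Prop := adjmx A = A.

Definition psd (n : nat) (A : 'M[algC]_n) : Prop :=
  hermitian A /\ forall v : 'cV[algC]_n, 0 <= (adjmx v *m A *m v) 0 0.

Definition density (n : nat) (rho : 'M[algC]_n) : Prop :=
  psd rho /\ \tr rho = 1.

Definition povm (n : nat) (O : finType) (M : O -> 'M[algC]_n) : Prop :=
  (forall i, psd (M i)) /\ \sum_(i : O) M i = 1%:M.

Definition Msum (n : nat) (O : finType) (M : O -> 'M[algC]_n) (A : {set O})
  : 'M[algC]_n := \sum_(i in A) M i.

Definition dist_val (n : nat) (O : finType) (M : O -> 'M[algC]_n)
  (rho sigma : 'M[algC]_n) : algC :=
  2^-1 * \sum_(i : O) `| \tr (M i *m (rho - sigma)) |.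

Definition is_Kstar (n : nat) (O : finType) (M : O -> 'M[algC]_n) (k : algC)
  : Prop :=
  (exists rho sigma, density rho /\ density sigma /\ dist_val M rho sigma = k)
  /\ (forall rho sigma, density rho -> density sigma -> dist_val M rho sigma <= k).

Definition is_lambda_max (n : nat) (A : 'M[algC]_n) (l : algC) : Prop :=
  eigenvalue A l /\ forall b, eigenvalue A b -> b <= l.
Definition is_lambda_min (n : nat) (A : 'M[algC]_n) (l : algC) : Prop :=
  eigenvalue A l /\ forall b, eigenvalue A b -> l <= b.

Definition is_gap (n : nat) (O : finType) (M : O -> 'M[algC]_n) (A : {set O})
  (g : algC) : Prop :=
  exists lmax lmin, is_lambda_max (Msum M A) lmax /\
    is_lambda_min (Msum M A) lmin /\ g = lmax - lmin.

Definition is_max_gap (n : nat) (O : finType) (M : O -> 'M[algC]_n) (k : algC)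
  : Prop :=
  (exists A, is_gap M A k) /\ (forall A g, is_gap M A g -> g <= k).

(* Main.v *)
Require Import Defs.
From HB Require Import structures.
From mathcomp Require Import all_boot all_order all_algebra all_field.
From Stdlib Require Import ClassicalEpsilon.
Import Order.TTheory GRing.Theory Num.Theory.
Local Open Scope ring_scope.

Set Implicit Arguments. Unset Strict Implicit.

Lemma adjmxE m p (A : 'M[algC]_(m, p)) : adjmx A = (map_mx (@Num.conj _) A)^T.
Proof. by []. Qed.

Lemma adjmx_entry m p (A : 'M[algC]_(m, p)) i j : adjmx A i j = (A j i)^*.
Proof. by rewrite !mxE. Qed.

Lemma adjmxK m p (A : 'M[algC]_(m, p)) : adjmx (adjmx A) = A.
Proof. by apply/matrixP => i j; rewrite !mxE conjCK. Qed.

Lemma adjmx_mul m p q (A : 'M[algC]_(m, p)) (B : 'M[algC]_(p, q)) :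
  adjmx (A *m B) = adjmx B *m adjmx A.
Proof. by rewrite /adjmx map_mxM trmx_mul. Qed.

Lemma adjmxD m p (A B : 'M[algC]_(m, p)) : adjmx (A + B) = adjmx A + adjmx B.
Proof. by rewrite /adjmx map_mxD linearD. Qed.

Lemma adjmx0 m p : adjmx (0 : 'M[algC]_(m, p)) = 0.
Proof. by rewrite /adjmx map_mx0 trmx0. Qed.

Lemma ex_max (I : finType) (i0 : I) (F : I -> algC) :
  (forall i, F i \is Num.real) -> exists j, forall i, F i <= F j.
Proof.
move=> Fr.
suff [j Hj] : exists j, forall i, i \in i0 :: enum I -> F i <= F j.
  by exists j => i; apply: Hj; rewrite inE mem_enum orbT.
elim: (enum I) => [|a s [j IH]].
  by exists i0 => i; rewrite inE => /eqP ->.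
case/orP: (real_leVge (Fr a) (Fr j)) => [le|le].
  exists j => i; rewrite !inE => /or3P [/eqP->| /eqP -> //| Hs].
  - exact: IH (mem_head _ _).
  - by apply: IH; rewrite inE Hs orbT.
exists a => i; rewrite !inE => /or3P [/eqP->| /eqP -> //| Hs].
  exact: le_trans (IH _ (mem_head _ _)) le.
by apply: le_trans le; apply: IH; rewrite inE Hs orbT.
Qed.

Lemma ex_min (I : finType) (i0 : I) (F : I -> algC) :
  (forall i, F i \is Num.real) -> exists j, forall i, F j <= F i.
Proof.
move=> Fr; have [j Hj] := @ex_max I i0 (fun i => - F i) (fun i => ltac:(rewrite realN; exact: Fr)).
by exists j => i; have := Hj i; rewrite lerN2.
Qed.

Definition spP n (H : 'M[algC]_n) := spectralmx H.
Definition spd n (H : 'M[algC]_n) := spectral_diag H.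
Arguments spP {n} H.
Arguments spd {n} H.
Section S2.
Import Num.Def.
Local Open Scope sesquilinear_scope.

Lemma herm_sym n (H : 'M[algC]_n) : Defs.hermitian H -> H \is hermsymmx.
Proof.
move=> hH; apply/is_hermitianmxP; rewrite expr0 scale1r -map_trmx.
by rewrite [RHS]hH.
Qed.



Lemma spP_unit1 n (H : 'M[algC]_n) : spP H *m adjmx (spP H) = 1%:M.
Proof. by rewrite adjmxE map_trmx; apply/unitarymxP; exact: spectral_unitarymx. Qed.

Lemma spP_unit2 n (H : 'M[algC]_n) : adjmx (spP H) *m spP H = 1%:M.
Proof.
rewrite adjmxE map_trmx -invmx_unitary ?spectral_unitarymx //.
by rewrite mulVmx // spectral_unit.
Qed.

Lemma sp_decomp n (H : 'M[algC]_n) : Defs.hermitian H ->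
  H = adjmx (spP H) *m diag_mx (spd H) *m spP H.
Proof.
move=> hH; have /hermitian_normalmx /orthomx_spectralP E := herm_sym hH.
rewrite {1}E invmx_unitary ?spectral_unitarymx //.
by rewrite adjmxE map_trmx.
Qed.

Lemma spd_real n (H : 'M[algC]_n) j : Defs.hermitian H -> spd H 0 j \is Num.real.
Proof.
by move=> hH; have /mxOverP := hermitian_spectral_diag_real (herm_sym hH); apply.
Qed.

Lemma row_spP_neq0 n (H : 'M[algC]_n) j : row j (spP H) != 0.
Proof.
apply/negP => /eqP E.
have Ek : forall k, spP H j k = 0.
  by move=> k; have := congr1 (fun X : 'rV[algC]_n => X 0 k) E; rewrite !mxE.
have := spP_unit1 H.
move/(congr1 (fun X : 'M[algC]_n => X j j)); rewrite mxE.
under eq_bigr => k _ do rewrite Ek mul0r.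
by rewrite big1 // mxE eqxx => /eqP; rewrite eq_sym oner_eq0.
Qed.

Lemma eig_d n (H : 'M[algC]_n) j : Defs.hermitian H -> eigenvalue H (spd H 0 j).
Proof.
move=> hH; apply/eigenvalueP; exists (row j (spP H)); last exact: row_spP_neq0.
rewrite [X in _ *m X = _](sp_decomp hH) -row_mul !mulmxA spP_unit1 mul1mx row_mul.
apply/rowP => k; rewrite !mxE; under eq_bigr => l _ do rewrite !mxE.
rewrite (bigD1 j) //= big1 ?addr0 ?eqxx ?mulr1n //.
by move=> l /negbTE nl; rewrite eq_sym nl mulr0n mul0r.
Qed.

Lemma eig_in_d n (H : 'M[algC]_n) b : Defs.hermitian H -> eigenvalue H b ->
  exists j, b = spd H 0 j.
Proof.
move=> hH /eigenvalueP [v Hv vn0].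
set w := v *m adjmx (spP H).
have Hw : w *m diag_mx (spd H) = b *: w.
  have := congr1 (fun X => X *m adjmx (spP H)) Hv.
  rewrite /= {1}(sp_decomp hH) -!mulmxA spP_unit1 mulmx1 /w.
  by rewrite -scalemxAl !mulmxA.
have wn0 : w != 0.
  apply: contra vn0 => /eqP w0; apply/eqP.
  by rewrite -[v]mulmx1 -(spP_unit2 H) mulmxA -/w w0 mul0mx.
clearbody w.
have [k wk] : exists k, w 0 k != 0.
  case: (boolP [exists k, w 0 k != 0]) => [/existsP //|].
  rewrite negb_exists => /forallP A.
  have w0 : w = 0.
    by apply/rowP => k; rewrite mxE; apply/eqP; have := A k; rewrite negbK.
  by rewrite w0 eqxx in wn0.
exists k; have := congr1 (fun X : 'rV[algC]_n => X 0 k) Hw; rewrite /= mul_mx_diag !mxE.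
by move/eqP; rewrite mulrC eq_sym (inj_eq (mulIf wk)) => /eqP.
Qed.

End S2.

Definition spS n (H rho : 'M[algC]_n) := spP H *m rho *m adjmx (spP H).

Lemma tr_decomp n (H rho : 'M[algC]_n) : Defs.hermitian H ->
  \tr (H *m rho) = \sum_j spd H 0 j * spS H rho j j.
Proof.
move=> hH; rewrite {1}(sp_decomp hH) -!mulmxA mxtrace_mulC -mulmxA.
by rewrite /mxtrace; apply: eq_bigr => j _; rewrite mul_diag_mx mxE.
Qed.

Lemma spS_sum n (H rho : 'M[algC]_n) : \sum_j spS H rho j j = \tr rho.
Proof.
rewrite -/(mxtrace _) /spS mxtrace_mulC mulmxA spP_unit2 mul1mx //.
Qed.

Lemma spS_ge0 n (H rho : 'M[algC]_n) j : psd rho -> 0 <= spS H rho j j.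
Proof.
move=> [_ q]; have := q (adjmx (row j (spP H))); rewrite adjmxK.
congr (_ <= _); rewrite /spS !mxE; apply: eq_bigr => k _; rewrite !mxE.
by congr (_ * _); apply: eq_bigr => l _; rewrite !mxE.
Qed.

Lemma lmax_ex n (H : 'M[algC]_n) : (0 < n)%N -> Defs.hermitian H ->
  exists l, is_lambda_max H l.
Proof.
move=> n0 hH.
have [j Hj] := @ex_max _ (Ordinal n0) _ (fun j => spd_real j hH).
exists (spd H 0 j); split; first exact: eig_d.
by move=> b /(eig_in_d hH) [k ->]; apply: Hj.
Qed.

Lemma lmin_ex n (H : 'M[algC]_n) : (0 < n)%N -> Defs.hermitian H ->
  exists l, is_lambda_min H l.
Proof.
move=> n0 hH.
have [j Hj] := @ex_min _ (Ordinal n0) _ (fun j => spd_real j hH).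
exists (spd H 0 j); split; first exact: eig_d.
by move=> b /(eig_in_d hH) [k ->]; apply: Hj.
Qed.

Lemma eig_real n (H : 'M[algC]_n) l : Defs.hermitian H -> eigenvalue H l ->
  l \is Num.real.
Proof. by move=> hH /(eig_in_d hH) [k ->]; apply: spd_real. Qed.

Lemma tr_real n (H rho : 'M[algC]_n) : Defs.hermitian H -> psd rho ->
  \tr (H *m rho) \is Num.real.
Proof.
move=> hH prho; rewrite tr_decomp //; apply: rpred_sum => j _.
by apply: rpredM; [apply: spd_real | apply: ger0_real; apply: spS_ge0].
Qed.

Lemma tr_le_lmax n (H rho : 'M[algC]_n) l : Defs.hermitian H ->
  is_lambda_max H l -> density rho -> \tr (H *m rho) <= l.
Proof.
move=> hH [_ lb] [prho trho].
rewrite tr_decomp // -[l]mulr1 -trho -(spS_sum H) mulr_sumr.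
apply: ler_sum => j _; apply: ler_wpM2r.
  exact: spS_ge0.
by apply: lb; apply: eig_d.
Qed.

Lemma tr_ge_lmin n (H rho : 'M[algC]_n) l : Defs.hermitian H ->
  is_lambda_min H l -> density rho -> l <= \tr (H *m rho).
Proof.
move=> hH [_ lb] [prho trho].
rewrite tr_decomp // -[l]mulr1 -trho -(spS_sum H) mulr_sumr.
apply: ler_sum => j _; apply: ler_wpM2r.
  exact: spS_ge0.
by apply: lb; apply: eig_d.
Qed.

Lemma tr_Msum n (O : finType) (M : O -> 'M[algC]_n) (A : {set O}) X :
  \tr (Msum M A *m X) = \sum_(i in A) \tr (M i *m X).
Proof. by rewrite /Msum mulmx_suml raddf_sum. Qed.

Lemma herm_Msum n (O : finType) (M : O -> 'M[algC]_n) (A : {set O}) :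
  povm M -> Defs.hermitian (Msum M A).
Proof.
move=> [pM _]; rewrite /Msum; apply: (big_ind (fun X => Defs.hermitian X)).
- exact: adjmx0.
- by move=> X Y hX hY; rewrite /Defs.hermitian adjmxD hX hY.
- by move=> i _; case: (pM i).
Qed.

Lemma gap_ex n (O : finType) (M : O -> 'M[algC]_n) (A : {set O}) :
  (0 < n)%N -> povm M -> exists g, is_gap M A g.
Proof.
move=> n0 pM; have hH := herm_Msum A pM.
have [l1 H1] := lmax_ex n0 hH; have [l2 H2] := lmin_ex n0 hH.
by exists (l1 - l2), l1, l2.
Qed.

Lemma gap_real n (O : finType) (M : O -> 'M[algC]_n) (A : {set O}) g :
  povm M -> is_gap M A g -> g \is Num.real.
Proof.
move=> pM [l1 [l2 [[e1 _] [[e2 _] ->]]]]; have hH := herm_Msum A pM.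
by apply: rpredB; apply: eig_real e1 || apply: eig_real e2.
Qed.

Lemma gap_uniq n (O : finType) (M : O -> 'M[algC]_n) (A : {set O}) g1 g2 :
  is_gap M A g1 -> is_gap M A g2 -> g1 = g2.
Proof.
move=> [a1 [b1 [[ea1 ba1] [[eb1 bb1] ->]]]] [a2 [b2 [[ea2 ba2] [[eb2 bb2] ->]]]].
have -> : a1 = a2 by apply/le_anti; rewrite ba1 ?ba2.
have -> : b1 = b2 by apply/le_anti; rewrite bb1 ?bb2.
by [].
Qed.

Lemma sum_bound n (O : finType) (M : O -> 'M[algC]_n) k rho sigma :
  povm M -> (forall A g, is_gap M A g -> g <= k) ->
  density rho -> density sigma ->
  \sum_(i : O) `| \tr (M i *m (rho - sigma)) | <= 2 * k.
Proof.
move=> pM kb drho dsig.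
have n0 : (0 < n)%N.
  rewrite lt0n; apply/negP => /eqP n0; subst n.
  by move: drho.2; rewrite /mxtrace big_ord0 => /eqP; rewrite eq_sym oner_eq0.
set a := fun i => \tr (M i *m (rho - sigma)).
have aE : forall i, a i = \tr (M i *m rho) - \tr (M i *m sigma).
  by move=> i; rewrite /a mulmxBr raddfB.
have ar : forall i, a i \is Num.real.
  move=> i; rewrite aE; have [pMi _] := pM; have hi := (pMi i).1.
  by apply: rpredB; apply: tr_real; [exact: hi | exact: drho.1 | exact: hi | exact: dsig.1].
set A := [set i | 0 <= a i].
have tot : \sum_(i : O) a i = 0.
  have := tr_Msum M setT (rho - sigma).
  have -> : Msum M setT = 1%:M by rewrite /Msum; under eq_bigl do rewrite in_setT; exact: pM.2.
  rewrite mul1mx linearB /= drho.2 dsig.2 subrr => E.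
  by rewrite [LHS](eq_bigl (fun i => i \in setT)) -?E // => i; rewrite in_setT.
have split1 : \sum_(i : O) `|a i| = \sum_(i in A) a i - \sum_(i in ~: A) a i.
  rewrite (bigID (fun i => i \in A)) /=; congr (_ + _).
    by apply: eq_bigr => i; rewrite inE => /ger0_norm.
  rewrite -sumrN; apply: eq_big => i; first by rewrite in_setC.
  rewrite !inE => ha; apply: ltr0_norm.
  by rewrite real_ltNge // ?real0.
have split2 : \sum_(i in A) a i + \sum_(i in ~: A) a i = 0.
  transitivity (\sum_i a i); last exact: tot.
  rewrite [RHS](bigID (fun i => i \in A)) /=.
  by congr (_ + _); apply: eq_bigl => i //; rewrite in_setC.
have [g Hg] := gap_ex A n0 pM.
have [l1 [l2 [H1 [H2 gE]]]] := Hg.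
have hH := herm_Msum A pM.
have sA : \sum_(i in A) a i <= g.
  rewrite (eq_bigr (fun i => \tr (M i *m (rho - sigma)))) // -tr_Msum.
  rewrite mulmxBr raddfB gE; apply: lerB.
    exact: tr_le_lmax.
  exact: tr_ge_lmin.
rewrite /a in split1 split2 sA *.
rewrite split1; have -> : \sum_(i in ~: A) \tr (M i *m (rho - sigma)) =
   - \sum_(i in A) \tr (M i *m (rho - sigma)).
  by apply/eqP; rewrite -addr_eq0 addrC split2.
rewrite opprK -mulr2n -[_ *+ 2]mulr_natl; apply: ler_wpM2l => //.
exact: le_trans sA (kb _ _ Hg).
Qed.

Lemma row_eig n (H : 'M[algC]_n) j : Defs.hermitian H ->
  row j (spP H) *m H = spd H 0 j *: row j (spP H).
Proof.
move=> hH; rewrite [X in _ *m X = _](sp_decomp hH) -row_mul !mulmxA spP_unit1 mul1mx row_mul.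
apply/rowP => k; rewrite !mxE; under eq_bigr => l _ do rewrite !mxE.
rewrite (bigD1 j) //= big1 ?addr0 ?eqxx ?mulr1n //.
by move=> l /negbTE nl; rewrite eq_sym nl mulr0n mul0r.
Qed.

Lemma adjmxZ m p c (A : 'M[algC]_(m, p)) : adjmx (c *: A) = c^* *: adjmx A.
Proof. by apply/matrixP => i k; rewrite !mxE rmorphM. Qed.

Lemma col_eig n (H : 'M[algC]_n) j : Defs.hermitian H ->
  H *m adjmx (row j (spP H)) = spd H 0 j *: adjmx (row j (spP H)).
Proof.
move=> hH; have := congr1 (@adjmx _ _) (row_eig j hH).
rewrite adjmx_mul hH adjmxZ => ->; congr (_ *: _).
by have /CrealP := spd_real j hH.
Qed.

Lemma col_norm n (H : 'M[algC]_n) j :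
  (adjmx (adjmx (row j (spP H))) *m adjmx (row j (spP H))) 0 0 = 1.
Proof.
have := spP_unit1 H; move/(congr1 (fun X : 'M[algC]_n => X j j)).
rewrite adjmxK !mxE eqxx mulr1n => <-; apply: eq_bigr => k _; rewrite !mxE //.
Qed.

Lemma quad_tr n (H : 'M[algC]_n) (psi : 'cV[algC]_n) :
  \tr (H *m (psi *m adjmx psi)) = (adjmx psi *m H *m psi) 0 0.
Proof. by rewrite mulmxA mxtrace_mulC mulmxA trace_mx11. Qed.

Lemma eig_quad n (H : 'M[algC]_n) (psi : 'cV[algC]_n) l :
  (adjmx psi *m psi) 0 0 = 1 -> H *m psi = l *: psi ->
  (adjmx psi *m H *m psi) 0 0 = l.
Proof.
by move=> nrm Hp; rewrite -mulmxA Hp -scalemxAr mxE nrm mulr1.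
Qed.

Lemma rank1_density n (psi : 'cV[algC]_n) :
  (adjmx psi *m psi) 0 0 = 1 -> density (psi *m adjmx psi).
Proof.
move=> nrm; split; last by rewrite mxtrace_mulC trace_mx11.
split; first by rewrite /Defs.hermitian adjmx_mul adjmxK.
move=> v; rewrite !mulmxA -[adjmx v *m psi *m adjmx psi *m v]mulmxA.
have -> : adjmx psi *m v = adjmx (adjmx v *m psi) by rewrite adjmx_mul adjmxK.
rewrite mxE big_ord1 adjmx_entry; exact: mul_conjC_ge0.
Qed.

Lemma sum_lower n (O : finType) (M : O -> 'M[algC]_n) (A : {set O}) lmax lmin
  (psi phi : 'cV[algC]_n) :
  povm M ->
  (adjmx psi *m psi) 0 0 = 1 -> (adjmx phi *m phi) 0 0 = 1 ->
  Msum M A *m psi = lmax *: psi -> Msum M A *m phi = lmin *: phi ->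
  2 * (lmax - lmin) <=
  \sum_(i : O) `| \tr (M i *m (psi *m adjmx psi - phi *m adjmx phi)) |.
Proof.
move=> pM npsi nphi epsi ephi.
set X := psi *m adjmx psi - phi *m adjmx phi.
set a := fun i => \tr (M i *m X).
have sA : \sum_(i in A) a i = lmax - lmin.
  rewrite /a -tr_Msum /X mulmxBr linearB /= !quad_tr.
  by rewrite (eig_quad npsi epsi) (eig_quad nphi ephi).
have tot : \sum_(i : O) a i = 0.
  have := tr_Msum M setT X.
  have -> : Msum M setT = 1%:M by rewrite /Msum; under eq_bigl do rewrite in_setT; exact: pM.2.
  rewrite mul1mx /X linearB /= mxtrace_mulC trace_mx11 npsi.
  rewrite mxtrace_mulC trace_mx11 nphi subrr => E.
  by rewrite [LHS](eq_bigl (fun i => i \in setT)) -?E // => i; rewrite in_setT.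
have sC : \sum_(i in ~: A) a i = - (lmax - lmin).
  apply/eqP; rewrite -addr_eq0 addrC -sA; apply/eqP.
  transitivity (\sum_i a i); last exact: tot.
  rewrite [RHS](bigID (fun i => i \in A)) /=.
  by congr (_ + _); apply: eq_bigl => i //; rewrite in_setC.
rewrite (bigID (fun i => i \in A)) /=.
apply: le_trans (lerD (ler_norm_sum _ _ _) (ler_norm_sum _ _ _)).
rewrite -/a.
have -> : \sum_(i | true && (i \in A)) a i = \sum_(i in A) a i by [].
have -> : \sum_(i | true && (i \notin A)) a i = \sum_(i in ~: A) a i.
  by apply: eq_bigl => i; rewrite in_setC.
rewrite sA sC normrN mulr_natl mulr2n.
have r1 : lmax \is Num.real.
  rewrite -(eig_quad npsi epsi) -quad_tr; apply: tr_real; first exact: herm_Msum.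
  exact: (rank1_density npsi).1.
have r2 : lmin \is Num.real.
  rewrite -(eig_quad nphi ephi) -quad_tr; apply: tr_real; first exact: herm_Msum.
  exact: (rank1_density nphi).1.
by apply: lerD; apply: real_ler_norm; apply: rpredB.
Qed.

Unset Implicit Arguments.
Theorem mainTheorem8 (n : nat) (O : finType) (M : O -> 'M[algC]_n) :
  (2 <= n)%N -> povm M ->
  exists k : algC,
    is_Kstar M k /\ is_max_gap M k /\
    (forall (Astar : {set O}) (lmax lmin : algC),
       is_lambda_max (Msum M Astar) lmax ->
       is_lambda_min (Msum M Astar) lmin ->
       (forall A g, is_gap M A g -> g <= lmax - lmin) ->
       forall psi phi : 'cV[algC]_n,
         (adjmx psi *m psi) 0 0 = 1 -> (adjmx phi *m phi) 0 0 = 1 ->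
         (adjmx psi *m phi) 0 0 = 0 ->
         Msum M Astar *m psi = lmax *: psi ->
         Msum M Astar *m phi = lmin *: phi ->
         2 * k = \sum_(i : O)
                   `| \tr (M i *m (psi *m adjmx psi - phi *m adjmx phi)) |).
Proof.
move=> n2 pM; have n0 : (0 < n)%N by apply: leq_trans n2.
pose f := fun A : {set O} => proj1_sig (constructive_indefinite_description _ (gap_ex A n0 pM)).
have Hf : forall A, is_gap M A (f A).
  by move=> A; rewrite /f; case: constructive_indefinite_description.
have [As HAs] := @ex_max _ set0 f (fun A => gap_real pM (Hf A)).
set k := f As.
have kmax : forall A g, is_gap M A g -> g <= k.
  by move=> A g Hg; rewrite (gap_uniq Hg (Hf A)); apply: HAs.
have two0 : (2 : algC) != 0 by rewrite pnatr_eq0.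
have key : forall (Astar : {set O}) lmax lmin (psi phi : 'cV[algC]_n),
    lmax - lmin = k ->
    (adjmx psi *m psi) 0 0 = 1 -> (adjmx phi *m phi) 0 0 = 1 ->
    Msum M Astar *m psi = lmax *: psi -> Msum M Astar *m phi = lmin *: phi ->
    2 * k = \sum_(i : O) `| \tr (M i *m (psi *m adjmx psi - phi *m adjmx phi)) |.
  move=> Astar lmax lmin psi phi gk npsi nphi epsi ephi; apply/le_anti/andP; split.
    by rewrite -gk; apply: (sum_lower pM npsi nphi epsi ephi).
  apply: sum_bound => //; exact: rank1_density.
exists k; split; last split.
- have hH := herm_Msum As pM.
  have [l1 [l2 [[e1 b1] [[e2 b2] gE]]]] := Hf As.
  have [j1 E1] := eig_in_d hH e1; have [j2 E2] := eig_in_d hH e2.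
  set psi := adjmx (row j1 (spP (Msum M As))).
  set phi := adjmx (row j2 (spP (Msum M As))).
  have npsi := col_norm (Msum M As) j1; have nphi := col_norm (Msum M As) j2.
  have epsi := col_eig j1 hH; have ephi := col_eig j2 hH.
  rewrite -E1 in epsi; rewrite -E2 in ephi.
  split.
    exists (psi *m adjmx psi), (phi *m adjmx phi); split; first exact: rank1_density.
    split; first exact: rank1_density.
    rewrite /dist_val -(key As l1 l2 psi phi) // mulrA mulVf // mul1r //.
  move=> rho sigma drho dsig; rewrite /dist_val.
  rewrite -[k](mulKf two0); apply: ler_wpM2l; first by rewrite invr_ge0 ler0n.
  exact: (sum_bound pM kmax drho dsig).
- split; first by exists As; exact: Hf.
  exact: kmax.
- move=> Astar lmax lmin Hmax Hmin bnd psi phi npsi nphi _ epsi ephi.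
  apply: (key Astar lmax lmin) => //.
  apply/le_anti/andP; split; last by apply: bnd; exact: Hf.
  by apply: (kmax Astar); exists lmax, lmin.
Qed.
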